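(* For every integer $n>0$ and every integer $j$ with $0\le j\le n$, the number $\Phi_n=\prod_{p\text{ prime},\ \{n/p\}\in[2/3,1)}p$ divides $\binom{n+j}{n}\binom{2n-j}{n}$.
   Context: $\{x\}$ denotes the fractional part of $x$. *)

(* Defs.v *)
From mathcomp Require Import all_boot all_order all_algebra.
Set Implicit Arguments. Unset Strict Implicit. Unset Printing Implicit Defensive.
Import Order.TTheory GRing.Theory Num.Theory.

Definition fracQ (x : rat) : rat := x - (Num.floor x)%:~R.

(* Phi_n = prod of primes p with {n/p} in [2/3, 1).  For a prime p > 2n we
   have {n/p} = n/p < 1/2, so all such primes lie in [0, 2n]; the product is
   taken over that finite range. *)
Definition Phi (n : nat) : nat :=
  \prod_(0 <= p < (2 * n).+1 | prime p &&
      ((2%:Q / 3%:Q <= fracQ (n%:Q / p%:Q)) && (fracQ (n%:Q / p%:Q) < 1))%R) p.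

(* Main.v *)
Require Import Defs.
From mathcomp Require Import all_boot all_order all_algebra.
From mathcomp Require Import zify ring lra.
Import Order.TTheory GRing.Theory Num.Theory.

Lemma logfact_ext p m N : prime p -> m <= N ->
  logn p m`! = \sum_(1 <= k < N.+1) m %/ p ^ k.
Proof.
move=> pp mN; rewrite logn_fact // [RHS](big_cat_nat _ (n:=m.+1)) //=.
rewrite [X in _ + X]big1_seq ?addn0 // => k /andP[_]; rewrite mem_index_iota => /andP[h _].
apply: divn_small; apply: (leq_trans _ (ltn_expl k (prime_gt1 pp))); lia.
Qed.

Lemma carry p a b : prime p -> p <= a %% p + b %% p -> p %| 'C(a + b, a).
Proof.
move=> pp hc.
have p0 : 0 < p by apply: prime_gt0.
have hC : 'C(a+b,a) * (a`! * b`!) = (a+b)`!.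
  by rewrite -{2}(addKn a b) bin_fact // leq_addr.
have Cpos : 0 < 'C(a+b,a) by rewrite bin_gt0 leq_addr.
have : logn p (a+b)`! = logn p 'C(a+b,a) + (logn p a`! + logn p b`!).
  by rewrite -hC !lognM ?fact_gt0 ?muln_gt0 ?fact_gt0.
rewrite !(@logfact_ext p _ (a+b)) //; try lia.
rewrite -big_split /=.
have ab : 0 < a + b by have := leq_mod a p; have := leq_mod b p; lia.
under eq_bigr => k _ do rewrite divnD ?expn_gt0 ?p0 //.
rewrite big_split /= [X in _ + X = _]big_ltn; last by lia.
rewrite expn1 hc => e.
have : 0 < logn p 'C(a + b, a) by lia.
by rewrite logn_gt0 mem_primes => /and3P[].
Qed.

Lemma prod_primes_dvd m X (P : pred nat) :
  (forall p, P p -> prime p && (p %| X)) -> \prod_(0 <= p < m | P p) p %| X.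
Proof.
move=> H; elim: m => [|m IH]; first by rewrite big_geq // dvd1n.
rewrite big_mkcond big_nat_recr //= -big_mkcond.
case: ifP => Pm; last by rewrite muln1 IH.
move: (H m Pm) => /andP[pm dm].
rewrite Gauss_dvd ?IH ?dm //.
rewrite big_seq_cond.
apply: (big_ind (fun x => coprime x m)); first exact: coprime1n.
- by move=> x y hx hy; rewrite coprimeMl hx hy.
move=> i /andP[]; rewrite mem_index_iota => /andP[_ im] Pi.
move: (H i Pi) => /andP[pi _].
rewrite prime_coprime // dvdn_prime2 //; apply/eqP => ei; lia.
Qed.

Lemma mod_case p n j : (0 < p)%N -> (j <= n)%N ->
  ((n - j) %% p + j %% p = n %% p \/ (n - j) %% p + j %% p = n %% p + p)%N.
Proof.
move=> p0 jn.
have e : (((n - j) %% p + j %% p) %% p = n %% p)%N by rewrite modnDm subnK.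
have := ltn_pmod (n - j) p0; have := ltn_pmod j p0.
case: (ltnP ((n - j) %% p + j %% p) p) => c h1 h2.
  by left; rewrite -(modn_small c) e.
right; move: e; rewrite -(subnK c) modnDr modn_small; first by move=> ->.
move: h1 h2; move: ((n - j) %% p) (j %% p) => u t; lia.
Qed.

Local Open Scope ring_scope.
Lemma fracQ_nat (n p : nat) : (0 < p)%N ->
  fracQ (n%:R / p%:R : rat) = (n %% p)%N%:R / p%:R.
Proof.
move=> p0.
have P0 : (0 < (p%:R : rat))%R by rewrite ltr0n.
have rP : ((n %% p)%N%:R : rat) < p%:R by rewrite ltr_nat ltn_pmod.
have e : (n%:R / p%:R : rat) = (n %/ p)%N%:R + (n %% p)%N%:R / p%:R.
  rewrite {1}(divn_eq n p) natrD natrM; field; lra.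
have fl : Num.floor (n%:R / p%:R : rat) = (n %/ p)%N%:Z.
  apply: floor_def; rewrite e; change (((n %/ p)%N%:Z)%:~R : rat) with ((n %/ p)%N%:R : rat).
  rewrite intrD; change (((n %/ p)%N%:Z)%:~R : rat) with ((n %/ p)%N%:R : rat).
  have h1 : 0 <= ((n %% p)%N%:R / p%:R : rat) by rewrite divr_ge0 // ler0n.
  have h2 : ((n %% p)%N%:R / p%:R : rat) < 1 by rewrite ltr_pdivrMr // mul1r.
  apply/andP; split; lra.
rewrite /fracQ fl e; change (((n %/ p)%N%:Z)%:~R : rat) with ((n %/ p)%N%:R : rat); ring.
Qed.

Local Close Scope ring_scope.
Theorem mainTheorem15 (n j : nat) :
  0 < n -> j <= n -> Phi n %| 'C(n + j, n) * 'C(2 * n - j, n).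
Proof.
move=> n0 jn; rewrite /Phi; apply: prod_primes_dvd => p /andP[pp /andP[h1 _]].
rewrite pp /=.
have p0 : (0 < p)%N by apply: prime_gt0.
move: h1; rewrite -!pmulrn fracQ_nat // => h1.
have P0 : (0 < (p%:R : rat))%R by rewrite ltr0n.
have h3 : (2 * p <= 3 * (n %% p))%N.
  rewrite -(ler_nat rat) !natrM.
  move: h1; rewrite ler_pdivlMr // => h1.
  have h4 : (((2%:R / 3%:R : rat) * p%:R) * 3%:R = 2%:R * p%:R)%R by field.
  have h5 : ((2%:R / 3%:R : rat) * p%:R <= (n %% p)%N%:R)%R by exact: h1.
  lra.
case: (leqP p (n %% p + j %% p)) => c.
  by apply: dvdn_mulr; apply: carry.
have e : (2 * n - j = n + (n - j))%N by lia.
rewrite e; apply: dvdn_mull; apply: carry => //.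
have := @mod_case p n j p0 jn; have := ltn_pmod (n - j) p0; lia.
Qed.
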